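(* Let $R$ be an associative ring with identity and $M$ a left $R$-module which is projective in $\sigma[M]$. If $M$ has Krull dimension, then $LgSpec(M)$ is weakly scattered.
   Context: Krull dimension of a module is in the sense of Gordon–Robson (the deviation of its lattice of submodules). $\Lambda^{fi}(M)$ is the set of fully invariant submodules of $M$. For $N,L\leq M$, $N_ML=\sum\{f(N)\mid f\in\mathrm{Hom}_R(M,L)\}$. $LgSpec(M)$ is the set of submodules $P\neq M$ such that for all $N,L\in\Lambda^{fi}(M)$, $N_ML\subseteq P$ implies $N\subseteq P$ or $L\subseteq P$, with the topology whose open sets are $\{P\in LgSpec(M)\mid N\nsubseteq P\}$, $N\in\Lambda^{fi}(M)$. A topological space $S$ is weakly scattered if every non-empty closed subset $F$ contains a point $x$ such that there is an open set $U$ with $x\in U\cap F\subseteq\overline{\{x\}}$. *)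

(* Defs.v *)
(* Left modules over an (associative, unital, possibly
   non-commutative) ring R are MathComp's [lmodType R] with R : pzRingType;
   submodules are predicates [M -> Prop]; R-linear maps are functions
   satisfying MathComp's [linear] predicate. *)
From HB Require Import structures.
From mathcomp Require Import all_boot all_order all_algebra.
Set Implicit Arguments.
Unset Strict Implicit.
Unset Printing Implicit Defensive.
Import GRing.Theory.
Local Open Scope ring_scope.

Section ModuleDefs.
Variable R : pzRingType.

Definition subm (M : lmodType R) (A B : M -> Prop) : Prop :=
  forall x, A x -> B x.

Definition submodule (M : lmodType R) (N : M -> Prop) : Prop :=
  N 0 /\ (forall x y, N x -> N y -> N (x + y)) /\
  (forall (a : R) x, N x -> N (a *: x)).

Definition is_hom (M K : lmodType R) (f : M -> K) : Prop := linear f.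

(* K is M-generated: the canonical map from the direct sum of copies of M
   indexed by Hom(M,K) onto K is surjective, i.e. each element of K is a
   finite sum of images of homomorphisms M -> K. *)
Definition M_generated (M K : lmodType R) : Prop :=
  forall k : K, exists (n : nat) (f : 'I_n -> M -> K) (m : 'I_n -> M),
    (forall i, is_hom (f i)) /\ k = \sum_(i < n) f i (m i).

(* N belongs to sigma[M]: N is (isomorphic to) a submodule of an
   M-generated module. *)
Definition in_sigma (M N : lmodType R) : Prop :=
  exists (K : lmodType R) (g : N -> K),
    M_generated M K /\ is_hom g /\ injective g.

Definition projective_in_sigma (M : lmodType R) : Prop :=
  forall (N L : lmodType R), in_sigma M N -> in_sigma M L ->
  forall g : N -> L, is_hom g -> (forall y : L, exists x : N, g x = y) ->
  forall f : M -> L, is_hom f ->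
  exists h : M -> N, is_hom h /\ (forall x, g (h x) = f x).

(* Ordinals are represented by the elements of an arbitrary
   well-founded strict order (O, lt).  [devle lt a lo hi] means that the
   interval [lo, hi] of submodules has deviation <= a: in every descending
   chain hi >= x_0 >= x_1 >= ... >= lo of submodules, all but finitely many
   factors [x_{i+1}, x_i] have deviation < a, i.e. are trivial (deviation
   -1) or have deviation <= b for some b < a. *)
Inductive devle (M : lmodType R) (O : Type) (lt : O -> O -> Prop)
  : O -> (M -> Prop) -> (M -> Prop) -> Prop :=
| devle_intro (a : O) (lo hi : M -> Prop) :
    (forall x : nat -> M -> Prop,
       (forall i, submodule (x i) /\ subm lo (x i) /\ subm (x i) hi) ->
       (forall i, subm (x i.+1) (x i)) ->
       exists n0, forall i, (n0 <= i)%N ->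
         subm (x i) (x i.+1) \/
         exists b, lt b a /\ devle lt b (x i.+1) (x i)) ->
    devle lt a lo hi.

Definition has_Krull_dim (M : lmodType R) : Prop :=
  exists (O : Type) (lt : O -> O -> Prop),
    well_founded lt /\
    exists a : O, devle lt a (fun x : M => x = 0) (fun _ => True).

Definition fully_invariant (M : lmodType R) (N : M -> Prop) : Prop :=
  submodule N /\
  forall f : M -> M, is_hom f -> forall x, N x -> N (f x).

(* N_M L = sum of f(N), f in Hom_R(M, L)  (L <= M; homomorphisms M -> L are
   viewed as endomorphisms of M with image in L) *)
Definition prodM (M : lmodType R) (N L : M -> Prop) : M -> Prop :=
  fun x => exists (n : nat) (f : 'I_n -> M -> M) (m : 'I_n -> M),
    (forall i, is_hom (f i) /\ (forall y, L (f i y))) /\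
    (forall i, N (m i)) /\ x = \sum_(i < n) f i (m i).

Definition LgSpec (M : lmodType R) (P : M -> Prop) : Prop :=
  submodule P /\ ~ (forall x, P x) /\
  forall N L : M -> Prop, fully_invariant N -> fully_invariant L ->
    subm (prodM N L) P -> subm N P \/ subm L P.

Definition LgOpen (M : lmodType R) (U : (M -> Prop) -> Prop) : Prop :=
  exists N : M -> Prop, fully_invariant N /\
    forall P, U P <-> (LgSpec P /\ ~ subm N P).

Definition LgClosed (M : lmodType R) (F : (M -> Prop) -> Prop) : Prop :=
  exists U, LgOpen U /\ forall P, F P <-> (LgSpec P /\ ~ U P).

Definition LgClosure1 (M : lmodType R) (P : M -> Prop) : (M -> Prop) -> Prop :=
  fun Q => forall F, LgClosed F -> F P -> F Q.

Definition LgSpec_weakly_scattered (M : lmodType R) : Prop :=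
  forall F : (M -> Prop) -> Prop, LgClosed F -> (exists P, F P) ->
    exists P, F P /\ exists U, LgOpen U /\ U P /\
      (forall Q, U Q -> F Q -> LgClosure1 P Q).

End ModuleDefs.

(* Main.v *)
Require Import Defs.
From mathcomp Require Import all_boot all_order all_algebra.
From Stdlib Require Import Classical ClassicalEpsilon Cantor.

Set Implicit Arguments.
Unset Strict Implicit.
Unset Printing Implicit Defensive.
Import GRing.Theory.

Section Proof.
Variable R : pzRingType.
Variable M : lmodType R.

Local Open Scope ring_scope.

Lemma hom0 (f : M -> M) : is_hom f -> f 0 = 0.
Proof.
move=> Hf; have := Hf 1 0 0; rewrite !scale1r addr0 => E.
by apply: (@addrI _ (f 0)); rewrite addr0 -E.
Qed.

Lemma homD (f : M -> M) : is_hom f -> forall u v, f (u + v) = f u + f v.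
Proof. move=> Hf u v; have E := Hf 1 u v; rewrite !scale1r in E; exact: E. Qed.

Lemma homZ (f : M -> M) : is_hom f -> forall a u, f (a *: u) = a *: f u.
Proof. move=> Hf a u; have E := Hf a u 0; rewrite !addr0 hom0 // addr0 in E; exact: E. Qed.

Lemma hom_sum (g : M -> M) n (F : 'I_n -> M) : is_hom g ->
  g (\sum_(i < n) F i) = \sum_(i < n) g (F i).
Proof.
move=> Hg; elim: n F => [|n IH] F; first by rewrite !big_ord0 hom0.
by rewrite !big_ord_recr /= homD // IH.
Qed.

Lemma sub_sum (A : M -> Prop) n (F : 'I_n -> M) : submodule A ->
  (forall i, A (F i)) -> A (\sum_(i < n) F i).
Proof.
move=> [H0 [HD _]]; elim: n F => [|n IH] F HF; first by rewrite big_ord0.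
rewrite big_ord_recr /=; apply: HD; [apply: IH => i|]; exact: HF.
Qed.

Definition fi (N : M -> Prop) := fully_invariant N.

Lemma fi_sub N : fi N -> submodule N. Proof. by case. Qed.

Lemma prodM_sub N L : fi N -> fi L -> submodule (prodM N L).
Proof.
move=> [[N0 [ND NZ]] NF] _.
split; [|split].
- exists 0%N, (fun (_ : 'I_0) (y : M) => y), (fun (_ : 'I_0) => (0 : M)); split; [|split].
  + by case.
  + by case.
  + by rewrite big_ord0.
- move=> x y [n1 [f1 [m1 [Hf1 [Hm1 ->]]]]] [n2 [f2 [m2 [Hf2 [Hm2 ->]]]]].
  exists (n1 + n2)%N,
    (fun i => match split i with inl j => f1 j | inr k => f2 k end),
    (fun i => match split i with inl j => m1 j | inr k => m2 k end).
  split; [|split].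
  + move=> i; case: (split i) => j; by [apply: Hf1 | apply: Hf2].
  + move=> i; case: (split i) => j; by [apply: Hm1 | apply: Hm2].
  + rewrite big_split_ord /=.
    congr (_ + _); apply: eq_bigr => i _.
    * by have -> : split (lshift n2 i) = inl i := unsplitK (inl i).
    * by have -> : split (rshift n1 i) = inr i := unsplitK (inr i).
- move=> a x [n [f [m [Hf [Hm ->]]]]].
  exists n, f, (fun i => a *: m i); split; [|split].
  + by [].
  + by move=> i; apply: NZ.
  + rewrite scaler_sumr; apply: eq_bigr => i _; rewrite homZ //; exact: (Hf i).1.
Qed.

Lemma prodM_subl N L : fi N -> fi L -> subm (prodM N L) N.
Proof.
move=> HN HL x [n [f [m [Hf [Hm ->]]]]].
apply: sub_sum; first exact: fi_sub.
move=> i; apply: HN.2; [exact: (Hf i).1 | exact: Hm].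
Qed.

Lemma prodM_subr N L : fi N -> fi L -> subm (prodM N L) L.
Proof.
move=> HN HL x [n [f [m [Hf [Hm ->]]]]].
apply: sub_sum; first exact: fi_sub.
move=> i; exact: (Hf i).2.
Qed.

Lemma prodM_fi N L : fi N -> fi L -> fi (prodM N L).
Proof.
move=> HN HL; split; first exact: prodM_sub.
move=> g Hg x [n [f [m [Hf [Hm ->]]]]].
rewrite hom_sum //.
exists n, (fun i y => g (f i y)), m; split; [|split] => //.
move=> i; split.
- move=> a u v; rewrite (Hf i).1 homD // homZ //.
- move=> y; apply: HL.2 => //; exact: (Hf i).2.
Qed.

Section Krull.
Variable F : (M -> Prop) -> Prop.
Hypothesis hF : forall q, F q -> submodule q.
Variable L : nat -> M -> Prop.
Hypothesis hL1 : forall n, exists q, F q /\ ~ subm (L n) q.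
Hypothesis hL2 : forall q, F q -> forall n m, n <> m -> subm (L n) q \/ subm (L m) q.

Definition C (J : nat -> Prop) : M -> Prop :=
  fun x => forall q, F q -> (forall n, J n -> subm (L n) q) -> q x.

Lemma C_sub J : submodule (C J).
Proof.
split; [|split].
- by move=> q Fq _; case: (hF Fq) => ? _.
- move=> x y Hx Hy q Fq HJ; case: (hF Fq) => _ [HD _]; apply: HD; [exact: Hx|exact: Hy].
- move=> a x Hx q Fq HJ; case: (hF Fq) => _ [_ HZ]; apply: HZ; exact: Hx.
Qed.

Lemma C_mono (J1 J2 : nat -> Prop) : (forall n, J1 n -> J2 n) -> subm (C J1) (C J2).
Proof. move=> H x Hx q Fq HJ; apply: Hx => // n /H; exact: HJ. Qed.

Lemma L_in_C (J : nat -> Prop) n : J n -> subm (L n) (C J).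
Proof. move=> Jn x Lx q Fq HJ; exact: HJ n Jn x Lx. Qed.

Lemma C_notin (J : nat -> Prop) n : ~ J n -> ~ subm (L n) (C J).
Proof.
move=> nJ H; case: (hL1 n) => q [Fq nq].
have HC : subm (C J) q.
  move=> x Cx; apply: Cx => // m Jm.
  have nm : n <> m by move=> E; apply: nJ; rewrite E.
  by case: (hL2 Fq nm) => // /nq.
by apply: nq => x /H /HC.
Qed.

Definition pr (k j : nat) : nat := to_nat (k, j).

Lemma pr_inj k j k' j' : pr k j = pr k' j' -> k = k' /\ j = j'.
Proof.
move=> E; have := cancel_of_to (k, j); rewrite /pr in E; rewrite E cancel_of_to.
by case=> -> ->.
Qed.

Lemma no_devle (O : Type) (lt : O -> O -> Prop) : well_founded lt ->
  forall a lo hi (J' : nat -> Prop) (g : nat -> nat), injective g ->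
  (forall n, ~ J' (g n)) -> subm lo (C J') ->
  subm (C (fun m => J' m \/ exists j, m = g j)) hi -> ~ devle lt a lo hi.
Proof.
move=> wf a; induction a as [a IH] using (well_founded_induction wf).
move=> lo hi J' g ginj nJ Hlo Hhi Hd.
inversion Hd as [a0 lo0 hi0 Hch E1 E2 E3]; subst a0 lo0 hi0.
pose X i := C (fun m => J' m \/ exists k j, (i <= k)%N /\ m = g (pr k j)).
have [n0 Hn0] : exists n0, forall i, (n0 <= i)%N ->
    subm (X i) (X i.+1) \/ exists b, lt b a /\ devle lt b (X i.+1) (X i).
  apply: Hch.
  - move=> i; split; first exact: C_sub.
    split.
    + move=> x /Hlo; apply: C_mono => m Hm; by left.
    + move=> x Hx; apply: Hhi; move: x Hx; apply: C_mono.
      move=> m [Hm|[k [j [_ ->]]]]; [by left | right; by exists (pr k j)].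
  - move=> i; apply: C_mono => m [Hm|[k [j [Hk ->]]]]; first by left.
    right; exists k, j; split => //; exact: ltnW.
have notJ : forall j, ~ (J' (g (pr n0 j)) \/
     exists k j', (n0.+1 <= k)%N /\ g (pr n0 j) = g (pr k j')).
  move=> j [H|[k [j' [Hk E]]]]; first exact: (nJ _ H).
  have [E1 _] := pr_inj (ginj _ _ E); rewrite -E1 ltnn in Hk; by [].
case: (Hn0 n0 (leqnn _)) => [Hs|[b [ltb Hb]]].
- apply: (@C_notin (fun m => J' m \/ exists k j, (n0.+1 <= k)%N /\ m = g (pr k j)) (g (pr n0 0)) (@notJ 0%N)) => x Lx; apply: Hs.
  apply: (L_in_C (J := fun m => J' m \/ exists k j, (n0 <= k)%N /\ m = g (pr k j))) Lx.
  right; exists n0, 0%N; by split.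
- apply: (IH b ltb (X n0.+1) (X n0)
      (fun m => J' m \/ exists k j, (n0.+1 <= k)%N /\ m = g (pr k j))
      (fun j => g (pr n0 j))).
  + move=> j j' /ginj /pr_inj; by case.
  + exact: notJ.
  + by move=> x.
  + apply: C_mono => m [[Hm|[k [j [Hk ->]]]]|[j ->]]; first by left.
    * right; exists k, j; split => //; exact: ltnW.
    * right; exists n0, j; by split.
  + exact: Hb.
Qed.

Lemma no_krull : has_Krull_dim M -> False.
Proof.
move=> [O [lt [wf [a Ha]]]].
apply: (@no_devle O lt wf a (fun x : M => x = 0) (fun _ => True) (fun _ => False) id) Ha.
- by move=> x y.
- by move=> n.
- by move=> x -> q Fq _; case: (hF Fq) => ? _.
- by [].
Qed.

End Krull.


Section Main.
Variable F : (M -> Prop) -> Prop.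
Variable N : M -> Prop.
Hypothesis fN : fi N.
Hypothesis hFc : forall q, F q <-> LgSpec q /\ subm N q.
Hypothesis Hk : has_Krull_dim M.

Definition D (K : M -> Prop) q := F q /\ ~ subm K q.
Definition I (K : M -> Prop) : M -> Prop := fun x => forall q, D K q -> q x.
Definition primeI K := forall A B, fi A -> fi B ->
  subm (prodM A B) (I K) -> subm A (I K) \/ subm B (I K).

Lemma F_spec q : F q -> LgSpec q. Proof. by move/hFc => []. Qed.

Lemma F_sub q : F q -> submodule q. Proof. by move/F_spec => []. Qed.

Lemma Dprod K A q : fi K -> fi A -> D K q -> ~ subm A q -> D (prodM K A) q.
Proof.
move=> fK fA [Fq nK] nA; split => // H.
case: (F_spec Fq) => _ [_ Hp]; by case: (Hp _ _ fK fA H).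
Qed.

Lemma Dprod_inv K A q : fi K -> fi A -> D (prodM K A) q -> D K q /\ ~ subm A q.
Proof.
move=> fK fA [Fq nKA]; split; first split => //.
- move=> H; apply: nKA => x /(prodM_subl fK fA); exact: H.
- move=> H; apply: nKA => x /(prodM_subr fK fA); exact: H.
Qed.

Lemma nonsub_ex K A : ~ subm A (I K) -> exists q, D K q /\ ~ subm A q.
Proof.
move=> HnA; apply: NNPP => H; apply: HnA => x Ax q Dq.
apply: NNPP => nqx; apply: H; exists q; split => //; move=> /(_ x Ax); exact: nqx.
Qed.

Lemma I_spec K q0 : fi K -> D K q0 -> primeI K -> LgSpec (I K).
Proof.
move=> fK Dq0 pK; split; [|split].
- split; [|split].
  + move=> q [Fq _]; by case: (F_sub Fq).
  + move=> x y Hx Hy q Dq; case: (F_sub Dq.1) => _ [HD _]; apply: HD; [exact: Hx|exact: Hy].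
  + move=> a x Hx q Dq; case: (F_sub Dq.1) => _ [_ HZ]; apply: HZ; exact: Hx.
- move=> Hall; case: (F_spec Dq0.1) => _ [Hne _]; apply: Hne => x; exact: Hall x q0 Dq0.
- exact: pK.
Qed.

Lemma main_ws (P0 : M -> Prop) : F P0 ->
  exists P, F P /\ exists U, LgOpen U /\ U P /\
      (forall Q, U Q -> F Q -> LgClosure1 P Q).
Proof.
move=> FP0.
case: (classic (exists K, fi K /\ (exists q, D K q) /\ primeI K)) => [[K [fK [[q0 Dq0] pK]]]|Hno].
- have HI := I_spec fK Dq0 pK.
  have nKI : ~ subm K (I K) by move=> H; apply: Dq0.2 => x /H; apply; exact: Dq0.
  exists (I K); split.
    apply/hFc; split => // x Nx q [Fq _]; case/hFc: Fq => _; apply; exact: Nx.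
  exists (fun P => LgSpec P /\ ~ subm K P); split; [|split].
  + by exists K; split.
  + by split.
  + move=> Q [LQ nKQ] FQ F' [U' [[N' [fN' HU']] HF']] F'I.
    apply/HF'; split => //.
    case/HF': F'I => _ nU'I.
    have sN' : subm N' (I K).
      apply: NNPP => H; apply: nU'I; apply/HU'; by split.
    move/HU' => [_]; apply => x /sN'; apply; by split.
- have Hstep : forall K, exists AB : (M -> Prop) * (M -> Prop),
      fi K /\ (exists q, D K q) -> fi AB.1 /\ fi AB.2 /\
      subm (prodM AB.1 AB.2) (I K) /\ ~ subm AB.1 (I K) /\ ~ subm AB.2 (I K).
    move=> K; apply: NNPP => Hn; apply: Hno; exists K.
    case: (classic (fi K /\ (exists q, D K q))) => [[fK Dq]|Hc]; last first.
      by exfalso; apply: Hn; exists (K, K) => /Hc.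
    split => //; split => // A B fA fB Hs.
    apply: NNPP => Hor; apply: Hn; exists (A, B) => _ /=.
    split => //; split => //; split => //; split => H; apply: Hor; by [left|right].
  pose st K := proj1_sig (constructive_indefinite_description _ (Hstep K)).
  have Hst : forall K, fi K /\ (exists q, D K q) -> fi (st K).1 /\ fi (st K).2 /\
      subm (prodM (st K).1 (st K).2) (I K) /\ ~ subm (st K).1 (I K) /\ ~ subm (st K).2 (I K).
    move=> K; exact: (proj2_sig (constructive_indefinite_description _ (Hstep K))).
  pose fix Ks n := if n is n'.+1 then prodM (Ks n') (st (Ks n')).1 else (fun _ : M => True).
  pose Ls n := prodM (Ks n) (st (Ks n)).2.
  have inv : forall n, fi (Ks n) /\ exists q, D (Ks n) q.
    elim => [|n [fK [q Dq]]].
    * split.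
        split; first by split; [|split].
        by [].
      exists P0; split => // H; case: (F_spec FP0) => _ [Hne _]; apply: Hne => x; exact: H.
    * have [f1 [f2 [Hs [n1 n2]]]] := Hst _ (conj fK (ex_intro _ q Dq)).
      split; first exact: prodM_fi.
      case: (nonsub_ex n1) => q' [Dq' nq'].
      exists q'; exact: Dprod.
  have KDmono : forall n q, D (Ks n.+1) q -> D (Ks n) q.
    move=> n q; have [fK Dq] := inv n.
    have [f1 _] := Hst _ (inv n).
    by move/(Dprod_inv fK f1) => [].
  have KDmono' : forall n m q, (n <= m)%N -> D (Ks m) q -> D (Ks n) q.
    move=> n m q /subnK <-; elim: (m - n)%N => [//|k IH] H.
    apply: IH; apply: KDmono; by rewrite addSn in H.
  have disj : forall n q, D (Ls n) q -> D (Ks n.+1) q -> False.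
    move=> n q HL HK; have [fK _] := inv n.
    have [f1 [f2 [Hs _]]] := Hst _ (inv n).
    have [DK nB] := Dprod_inv fK f2 HL.
    have [_ nA] := Dprod_inv fK f1 HK.
    case: (F_spec DK.1) => _ [_ Hp].
    have Hs' : subm (prodM (st (Ks n)).1 (st (Ks n)).2) q.
      move=> x /Hs; apply; exact: DK.
    by case: (Hp _ _ f1 f2 Hs').
  exfalso; apply: (@no_krull F F_sub Ls).
  + move=> n; have [fK _] := inv n.
    have [_ [f2 [_ [_ n2]]]] := Hst _ (inv n).
    case: (nonsub_ex n2) => q [Dq nq].
    have [Fq nL] := Dprod fK f2 Dq nq.
    by exists q.
  + move=> q Fq n m nm; apply: NNPP => H.
    have Ln : D (Ls n) q by split => // Hn; apply: H; left.
    have Lm : D (Ls m) q by split => // Hm; apply: H; right.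
    have LK : forall k, D (Ls k) q -> D (Ks k) q.
      move=> k; have [fK _] := inv k; have [_ [f2 _]] := Hst _ (inv k).
      by move/(Dprod_inv fK f2) => [].
    case: (ltngtP n m) => [lt|lt|eq]; last by apply: nm.
    * apply: (disj n q Ln); apply: (KDmono' _ m) => //; exact: LK.
    * apply: (disj m q Lm); apply: (KDmono' _ n) => //; exact: LK.
  + exact: Hk.
Qed.
End Main.

End Proof.

Theorem corollary4p34 (R : pzRingType) (M : lmodType R) :
  projective_in_sigma M -> has_Krull_dim M -> LgSpec_weakly_scattered M.
Proof.
move=> _ Hk F [U [[N [fN HU]] HF]] [P0 FP0].
have hFc : forall q, F q <-> LgSpec q /\ subm N q.
  move=> q; split.
  - move/HF=> [Lq nU]; split => //; apply: NNPP => H; apply: nU; apply/HU; by split.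
  - move=> [Lq Nq]; apply/HF; split => //; move/HU=> [_]; by apply.
exact: (main_ws hFc Hk FP0).
Qed.
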